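(* Let $(\Sigma,E)$ be an algebraic theory which is an algebraic presentation of a monad $(M,\eta,\mu)$ on $\mathbf{Set}$. Then $(\Sigma^{\mathrm{s}},E^{\mathrm{s}})$ is an algebraic presentation of the semifree monad $(M^{\mathrm{s}},\eta^{\mathrm{s}},\mu^{\mathrm{s}})$ on $M$.
   Context: An algebraic signature $\Sigma$ is a set of operation symbols, each with an arity $n\in\mathbb{N}$ (written $(\mathsf{op}:n)$). $\mathrm{Var}=\{v_1,v_2,\dots\}$ is a fixed set of variables; an equation is a pair of $\Sigma$-terms over $\mathrm{Var}$; an algebraic theory $(\Sigma,E)$ is a signature with a set $E$ of equations. The free monad $T_{\Sigma,E}$ of $(\Sigma,E)$ sends a set $X$ to the set of $\Sigma$-terms over $X$ modulo the smallest congruence containing all substitution instances of equations of $E$; its unit sends $x$ to its class and its multiplication flattens terms. An algebraic theory $(\Sigma',E')$ is an algebraic presentation of a $\mathbf{Set}$-monad $M$ if $T_{\Sigma',E'}\cong M$ as monads. For a monad $(M,\eta,\mu)$ on a category with finite coproducts, the semifree monad is $M^{\mathrm{s}}=\mathrm{Id}+M$ with unit $\eta^{\mathrm{s}}=\mathrm{inl}$ and multiplication $\mu^{\mathrm{s}}=[\mathrm{id}_{\mathrm{Id}+M},\ \mathrm{inr}\circ\mu\circ M[\eta,\mathrm{id}_M]]$. Given $(\Sigma,E)$, the theory $(\Sigma^{\mathrm{s}},E^{\mathrm{s}})$ has signature $\Sigma^{\mathrm{s}}=\Sigma\uplus\{\mathsf{a}:1\}$ and equations $E^{\mathrm{s}}$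 consisting of: $\mathsf{a}\mathsf{a}v_1=\mathsf{a}v_1$; $\mathsf{a}(\mathsf{op}(v_1,\dots,v_n))=\mathsf{op}(v_1,\dots,v_n)$ and $\mathsf{op}(\mathsf{a}v_1,\dots,\mathsf{a}v_n)=\mathsf{op}(v_1,\dots,v_n)$ for every $(\mathsf{op}:n)\in\Sigma$; and $t(\mathsf{a}v_1,\dots,\mathsf{a}v_n)=s(\mathsf{a}v_1,\dots,\mathsf{a}v_n)$ for every equation $t(v_1,\dots,v_n)=s(v_1,\dots,v_n)$ in $E$. *)

(* Defs.v *)
From mathcomp Require Import all_boot.
Set Implicit Arguments. Unset Strict Implicit. Unset Printing Implicit Defensive.

Record signature := Signature { op : Type; arity : op -> nat }.

Inductive term (S : signature) (X : Type) : Type :=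
| Var : X -> term S X
| App : forall o : op S, ('I_(arity o) -> term S X) -> term S X.
Arguments Var {S X} x.
Arguments App {S X} o ts.

Fixpoint subst (S : signature) (X Y : Type) (sigma : X -> term S Y)
  (t : term S X) : term S Y :=
  match t with
  | Var x => sigma x
  | App o ts => App o (fun i => subst sigma (ts i))
  end.

Definition tmap (S : signature) (X Y : Type) (f : X -> Y) (t : term S X) : term S Y :=
  subst (fun x => Var (f x)) t.

Definition tjoin (S : signature) (X : Type) (t : term S (term S X)) : term S X :=
  subst (fun u => u) t.

(* Var = {v_1, v_2, ...} is represented by nat (v_(i+1) is the number i). *)
Record theory := Theory {
  sig : signature;
  eqs : term sig nat -> term sig nat -> Prop
}.
Arguments eqs : clear implicits.

Inductive eqE (T : theory) (X : Type) : term (sig T) X -> term (sig T) X -> Prop :=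
| eqE_ax (l r : term (sig T) nat) (sigma : nat -> term (sig T) X) :
    eqs T l r -> eqE (subst sigma l) (subst sigma r)
| eqE_refl t : eqE t t
| eqE_sym t s : eqE t s -> eqE s t
| eqE_trans t s u : eqE t s -> eqE s u -> eqE t u
| eqE_app (o : op (sig T)) (ts ss : 'I_(arity o) -> term (sig T) X) :
    (forall i, eqE (ts i) (ss i)) -> eqE (App o ts) (App o ss).

Record monad_data := MonadData {
  carrier :> Type -> Type;
  fmap : forall X Y : Type, (X -> Y) -> carrier X -> carrier Y;
  ret : forall X : Type, X -> carrier X;
  mult : forall X : Type, carrier (carrier X) -> carrier X
}.
Arguments fmap m {X Y} _ _.
Arguments ret m {X} _.
Arguments mult m {X} _.

Definition is_monad (M : monad_data) : Prop :=
  (forall X (m : M X), fmap M (fun x => x) m = m) /\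
      (forall X Y Z (f : X -> Y) (g : Y -> Z) (m : M X),
          fmap M (fun x => g (f x)) m = fmap M g (fmap M f m)) /\
      (forall X Y (f : X -> Y) (x : X), fmap M f (ret M x) = ret M (f x)) /\
      (forall X Y (f : X -> Y) (m : M (M X)),
          fmap M f (mult M m) = mult M (fmap M (fmap M f) m)) /\
      (forall X (m : M X), mult M (ret M m) = m) /\
      (forall X (m : M X), mult M (fmap M (@ret M X) m) = m) /\
      (forall X (m : M (M (M X))),
          mult M (mult M m) = mult M (fmap M (@mult M X) m)).

(* Algebraic presentation: T_{Sigma,E} is isomorphic to M as monads.   *)
(* T_{Sigma,E} X is the quotient of term X by eqE; an isomorphism out  *)
(* of the quotient is encoded by a family phi_X : term X -> M X that   *)
(* respects eqE (well defined on classes), reflects it (injective on   *)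
(* classes), is surjective, natural, and commutes with the units and   *)
(* multiplications.                                     *)

Definition presents (T : theory) (M : monad_data) : Prop :=
  exists phi : forall X : Type, term (sig T) X -> M X,
    (forall X (t s : term (sig T) X), eqE t s -> phi X t = phi X s) /\
        (forall X (t s : term (sig T) X), phi X t = phi X s -> eqE t s) /\
        (forall X (m : M X), exists t : term (sig T) X, phi X t = m) /\
        (forall X Y (f : X -> Y) (t : term (sig T) X),
            phi Y (tmap f t) = fmap M f (phi X t)) /\
        (forall X (x : X), phi X (Var x) = ret M x) /\
        (forall X (t : term (sig T) (term (sig T) X)),
            phi X (tjoin t) = mult M (fmap M (phi X) (phi (term (sig T) X) t))).

Definition semifree (M : monad_data) : monad_data :=
  {| carrier := fun X => (X + M X)%type;
     fmap := fun X Y (f : X -> Y) (z : X + M X) =>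
               match z with
               | inl x => inl (f x)
               | inr m => inr (fmap M f m)
               end;
     ret := fun X (x : X) => inl x;
     mult := fun X (z : ((X + M X) + M (X + M X))%type) =>
               match z with
               | inl y => y
               | inr m => inr (mult M (fmap M
                             (fun y : (X + M X)%type => match y with
                                                 | inl x => ret M x
                                                 | inr m' => m'
                                                 end) m))
               end |}.

(* Sigma^s = Sigma + {a : 1}; None is the new unary symbol a. *)
Definition sig_s (S : signature) : signature :=
  {| op := option (op S);
     arity := fun o => match o with None => 1%N | Some o' => arity o' end |}.

Fixpoint emb (S : signature) (X : Type) (t : term S X) : term (sig_s S) X :=
  match t with
  | Var x => Var x
  | App o ts => @App (sig_s S) X (Some o) (fun i => emb (ts i))
  end.

Definition aop (S : signature) (X : Type) (t : term (sig_s S) X) : term (sig_s S) X :=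
  @App (sig_s S) X None (fun _ => t).

Definition opv (S : signature) (o : op S) : term (sig_s S) nat :=
  @App (sig_s S) nat (Some o) (fun i => Var (nat_of_ord i)).
Definition opav (S : signature) (o : op S) : term (sig_s S) nat :=
  @App (sig_s S) nat (Some o) (fun i => aop (Var (nat_of_ord i))).

Inductive eqs_s (T : theory) : term (sig_s (sig T)) nat -> term (sig_s (sig T)) nat -> Prop :=
| es_aa : eqs_s (aop (aop (Var 0%N))) (aop (Var 0%N))
| es_aop (o : op (sig T)) : eqs_s (aop (opv o)) (opv o)
| es_opa (o : op (sig T)) : eqs_s (opav o) (opv o)
| es_E (l r : term (sig T) nat) :
    eqs T l r ->
    eqs_s (subst (fun v => aop (Var v)) (emb l))
            (subst (fun v => aop (Var v)) (emb r)).

Definition theory_s (T : theory) : theory :=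
  {| sig := sig_s (sig T); eqs := @eqs_s T |}.

(* Main.v *)
Require Import Defs.
From mathcomp Require Import all_boot.
From Stdlib Require Import FunctionalExtensionality.
Require Import Defs.
Set Implicit Arguments. Unset Strict Implicit.
Fixpoint erase (S : signature) (X : Type) (t : term (sig_s S) X) : term S X :=
  match t with
  | Var x => Var x
  | App o ts =>
      match o return ('I_(@arity (sig_s S) o) -> term (sig_s S) X) -> term S X with
      | None => fun ts => erase (ts ord0)
      | Some o' => fun ts => App o' (fun i => erase (ts i))
      end ts
  end.

Lemma emb_erase (S : signature) X (t : term S X) : erase (emb t) = t.
Proof.
elim: t => [x|o ts IH] //=; congr App; apply: functional_extensionality => i; exact: IH.
Qed.

Lemma erase_subst (S : signature) X Y (sigma : X -> term (sig_s S) Y) t :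
  erase (subst sigma t) = subst (fun x => erase (sigma x)) (erase t).
Proof.
elim: t => [x|[o|] ts IH] //=; first (congr App; apply: functional_extensionality => i).
all: exact: IH.
Qed.

Lemma subst_comp (S : signature) X Y Z (f : X -> term S Y) (g : Y -> term S Z) t :
  subst g (subst f t) = subst (fun x => subst g (f x)) t.
Proof.
elim: t => [x|o ts IH] //=; congr App; apply: functional_extensionality => i; exact: IH.
Qed.

Lemma subst_Var (S : signature) X (t : term S X) : subst (fun x => Var x) t = t.
Proof.
elim: t => [x|o ts IH] //=; congr App; apply: functional_extensionality => i; exact: IH.
Qed.

Lemma emb_subst (S : signature) X Y (sigma : X -> term S Y) t :
  emb (subst sigma t) = subst (fun x => emb (sigma x)) (emb t).
Proof.
elim: t => [x|o ts IH] //=; congr App; apply: functional_extensionality => i; exact: IH.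
Qed.

Definition aV (S : signature) (X : Type) (x : X) : term (sig_s S) X := aop (Var x).
Definition nf (S : signature) (X : Type) (u : term S X) : term (sig_s S) X :=
  subst (@aV S X) (emb u).

Lemma L_aa (T : theory) X (u : term (sig (theory_s T)) X) :
  @eqE (theory_s T) X (aop (aop u)) (aop u).
Proof. exact: (@eqE_ax (theory_s T) X _ _ (fun _ => u) (es_aa T)). Qed.

Definition sig_of (S : signature) X (o : op S) (ts : 'I_(arity o) -> term (sig_s S) X)
  (n : nat) : term (sig_s S) X :=
  match insub n : option 'I_(arity o) with Some i => ts i | None => @App (sig_s S) X (Some o) ts end.

Lemma sig_ofE (S : signature) X (o : op S) ts (i : 'I_(arity o)) :
  @sig_of S X o ts i = ts i.
Proof. by rewrite /sig_of valK. Qed.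

Lemma L_aop (T : theory) X (o : op (sig T)) (ts : 'I_(arity o) -> term (sig (theory_s T)) X) :
  @eqE (theory_s T) X (aop (@App (sig (theory_s T)) X (Some o) ts)) (@App (sig (theory_s T)) X (Some o) ts).
Proof.
have H := (@eqE_ax (theory_s T) X _ _ (sig_of ts) (es_aop o)).
have E : forall i, @eqE (theory_s T) X (sig_of ts (nat_of_ord i)) (ts i).
  by move=> i; rewrite sig_ofE; apply: eqE_refl.
apply: eqE_trans; last apply: eqE_trans; [|exact: H|]; simpl.
- apply: eqE_app => i; apply: eqE_sym; apply: eqE_app => j; exact: E.
- apply: eqE_app => i; exact: E.
Qed.

Lemma L_opa (T : theory) X (o : op (sig T)) (ts : 'I_(arity o) -> term (sig (theory_s T)) X) :
  @eqE (theory_s T) X (@App (sig (theory_s T)) X (Some o) (fun i => aop (ts i))) (@App (sig (theory_s T)) X (Some o) ts).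
Proof.
have H := (@eqE_ax (theory_s T) X _ _ (sig_of ts) (es_opa o)).
have E : forall i, @eqE (theory_s T) X (sig_of ts (nat_of_ord i)) (ts i).
  by move=> i; rewrite sig_ofE; apply: eqE_refl.
apply: eqE_trans; last apply: eqE_trans; [|exact: H|]; simpl.
- apply: eqE_app => i; apply: eqE_app => j; apply: eqE_sym; exact: E.
- apply: eqE_app => i; exact: E.
Qed.

Lemma L_aidem (T : theory) X o (ts : 'I_(@arity (sig (theory_s T)) o) -> term (sig (theory_s T)) X) :
  @eqE (theory_s T) X (aop (App o ts)) (App o ts).
Proof.
case: o ts => [o|] ts; first exact: L_aop.
have E : @eqE (theory_s T) X (@App (sig (theory_s T)) X None ts) (aop (ts ord0)).
  apply: eqE_app => i /=; rewrite (ord1 i); exact: eqE_refl.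
apply: eqE_trans; last (apply: eqE_sym; exact: E).
apply: eqE_trans; last exact: (L_aa (ts ord0)).
apply: eqE_app => i; exact: E.
Qed.

Lemma subst_cong (T : theory) X Y (f g : X -> term (sig T) Y) t :
  (forall x, @eqE T Y (f x) (g x)) -> @eqE T Y (subst f t) (subst g t).
Proof.
move=> H; elim: t => [x|o ts IH] /=; first exact: H.
apply: eqE_app => i; exact: IH.
Qed.

Lemma a_nf (T : theory) X (w : term (sig T) X) :
  @eqE (theory_s T) X (aop (nf w)) (nf w).
Proof. case: w => [x|o us]; [exact: L_aa | exact: L_aop]. Qed.

Lemma nf_cong (T : theory) X (u v : term (sig T) X) :
  eqE u v -> @eqE (theory_s T) X (nf u) (nf v).
Proof.
elim=> {u v}.
- move=> l r sigma Hl.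
  have K : forall l0, nf (subst sigma l0) =
      subst (fun x => nf (sigma x)) (emb l0).
    by move=> l0; rewrite /nf emb_subst subst_comp.
  have K2 : forall l0, subst (fun x => nf (sigma x)) (subst (@aV _ _) (emb l0)) =
      subst (fun x => aop (nf (sigma x))) (emb l0).
    by move=> l0; rewrite subst_comp.
  have H := (@eqE_ax (theory_s T) X _ _ (fun x => nf (sigma x)) (es_E Hl)).
  rewrite !K; apply: eqE_trans; last apply: eqE_trans; [|exact: H|].
  + rewrite K2; apply: subst_cong => x; apply: eqE_sym; exact: a_nf.
  + rewrite K2; apply: subst_cong => x; exact: a_nf.
- move=> t; exact: eqE_refl.
- move=> t s _ H; exact: eqE_sym.
- move=> t s u _ H1 _ H2; exact: eqE_trans H1 H2.
- move=> o ts ss _ IH; apply: (@eqE_app (theory_s T) X (Some o)) => i; exact: IH.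
Qed.

Lemma a_erase (T : theory) X (t : term (sig (theory_s T)) X) :
  @eqE (theory_s T) X (aop t) (nf (erase t)).
Proof.
elim: t => [x|[o|] ts IH].
- exact: eqE_refl.
- apply: eqE_trans; first exact: L_aop.
  apply: eqE_trans; first (apply: eqE_sym; exact: L_opa).
  apply: eqE_app => i; exact: IH.
- apply: eqE_trans; last exact: (IH ord0).
  apply: eqE_trans; first exact: L_aidem.
  apply: eqE_app => i /=; rewrite (ord1 i); exact: eqE_refl.
Qed.

Lemma app_nf (T : theory) X o (ts : 'I_(@arity (sig (theory_s T)) o) -> term (sig (theory_s T)) X) :
  @eqE (theory_s T) X (App o ts) (nf (erase (App o ts))).
Proof.
apply: eqE_trans; last exact: a_erase.
apply: eqE_sym; exact: L_aidem.
Qed.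

Definition phis (S : signature) (M : monad_data) (phi : forall X, term S X -> M X)
  X (t : term (sig_s S) X) : (X + M X)%type :=
  match t with Var x => inl x | App _ _ => inr (phi X (erase t)) end.

Lemma phis_App (S : signature) (M : monad_data) (phi : forall X, term S X -> M X) X t :
  (forall x, t <> Var x) -> phis phi t = inr (phi X (erase t)).
Proof. by case: t => [x H|o ts _ //]; case: (H x). Qed.

Lemma erase_nf (S : signature) X Y (sigma : X -> term (sig_s S) Y) (l : term S X) :
  erase (subst sigma (subst (fun v => aop (Var v)) (emb l))) = subst (fun x => erase (sigma x)) l.
Proof. by rewrite erase_subst erase_subst emb_erase subst_Var. Qed.

Theorem corollary1 (T : theory) (M : monad_data) :
  is_monad M -> presents T M -> presents (theory_s T) (semifree M).
Proof.
move=> [Hid [Hcomp [Hfr [Hfm [Hm1 [Hm2 Hm3]]]]]] [phi [Hresp [Hrefl [Hsurj [Hnat [Hunit Hmult]]]]]].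
have toM_phis : forall X (t : term (sig (theory_s T)) X),
    match phis phi t with inl x => ret M x | inr m => m end = phi X (erase t).
  by move=> X [x|o ts] //=; rewrite Hunit.
exists (phis phi); split; [|split; [|split; [|split; [|split]]]].
- move=> X t s; elim=> {t s}.
  + move=> l r sigma; case=> [|o|o|l0 r0 Hl]; try reflexivity.
    rewrite !phis_App; first (rewrite !erase_nf; congr inr; apply: Hresp; exact: eqE_ax).
    * by clear Hl; case: r0.
    * by clear Hl; case: l0.
  + by [].
  + by move=> t s _ ->.
  + by move=> t s u _ -> _ ->.
  + move=> [o|] ts ss _ IH /=.
    * congr inr; apply: Hresp; apply: eqE_app => i; apply: Hrefl.
      by rewrite -!toM_phis IH.
    * by congr inr; rewrite -!toM_phis IH.
- move=> X [x|o ts] [y|o' ss] //.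
  + by case=> ->; exact: eqE_refl.
  + move=> H.
    have {}H : phi X (erase (App o ts)) = phi X (erase (App o' ss)) by case: H.
    apply: eqE_trans; first exact: app_nf.
    apply: eqE_trans; last (apply: eqE_sym; exact: app_nf).
    exact: nf_cong (Hrefl _ _ _ H).
- move=> X [x|m]; first by exists (Var x).
  case: (Hsurj X m) => t <-.
  exists (aop (emb t)); by rewrite /= emb_erase.
- move=> X Y f [x|o ts]; first by [].
  rewrite phis_App; last by move=> ?; discriminate.
  rewrite phis_App; last by move=> ?; discriminate.
  rewrite /tmap erase_subst.
  set u := erase (App o ts).
  rewrite /=; congr inr.
  rewrite -Hnat; reflexivity.
- by [].
- move=> X [u|o ts]; first by [].
  rewrite phis_App; last by move=> ?; discriminate.
  rewrite phis_App; last by move=> ?; discriminate.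
  rewrite /tjoin erase_subst.
  set u := erase (App o ts).
  rewrite /=; congr inr.
  rewrite -Hcomp.
  have -> : (fun x => match phis phi x with inl x0 => ret M x0 | inr m' => m' end)
     = (fun x => phi X (erase x)).
    by apply: functional_extensionality => x; exact: toM_phis.
  rewrite Hcomp -Hnat -Hmult /tjoin /tmap subst_comp.
  reflexivity.
Qed.
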